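(* Let $\mathbb{K}$ be a field of characteristic $2$, let $(A,L,\theta)$ be a restricted Lie–Rinehart algebra, let $(M,\rho)$ be a restricted Lie–Rinehart module and let $(\varphi,\omega)\in C^n_{\rm LR}(L;M)$. Then $\mathrm{d}^n_{\rm LR}(\varphi,\omega)\in C^{n+1}_{\rm LR}(L;M)$. Furthermore, $\mathrm{d}^{n+1}_{\rm LR}\circ\mathrm{d}^n_{\rm LR}=0$.
   Context: $\mathbb{K}$ has characteristic $2$. Restricted Lie algebra: Lie algebra with $x\mapsto x^{[2]}$, $(\lambda x)^{[2]}=\lambda^2x^{[2]}$, $\mathrm{ad}_{x^{[2]}}=\mathrm{ad}_x^2$, $(x+y)^{[2]}=x^{[2]}+y^{[2]}+[x,y]$. Restricted Lie–Rinehart algebra $(A,L,\theta)$: $A$ commutative associative, $L$ restricted Lie algebra and $A$-module, $\theta:L\to\mathrm{Der}(A)$ an $A$-linear restricted Lie morphism ($\mathrm{Der}(A)$ with commutator, $D^{[2]}=D^2$) with $[x,ay]=a[x,y]+\theta(x)(a)y$, $(ax)^{[2]}=a^2x^{[2]}+\theta(ax)(a)x$. Restricted Lie–Rinehart module: $A$-module $M$ with restricted Lie morphism $\rho:L\to\mathrm{End}(M)$ (so $\rho(x^{[2]})=\rho(x)^2$) and $\rho(x)(am)=a\rho(x)(m)+\theta(x)(a)m$. Write $x\cdot m=\rho(x)(m)$. $C^0_{\rm LR}(L;M)=M$, $C^1_{\rm LR}(L;M)=\mathrm{Hom}_A(L,M)$; for $n\ge2$, $C^n_{\rm LR}(L;M)$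 consists of pairs $(\varphi,\omega)$ with $\varphi:L^n\to M$ alternating and $A$-multilinear, $\omega:L\times L^{n-2}\to M$ alternating and $\mathbb{K}$-multilinear in the last $n-2$ arguments, such that for $z=(z_2,..,z_{n-1})$: $\omega(\lambda x,z)=\lambda^2\omega(x,z)$ ($\lambda\in\mathbb{K}$), $\omega(x+y,z)=\omega(x,z)+\omega(y,z)+\varphi(x,y,z)$, $\omega(ax,z)=a^2\omega(x,z)$ and $\omega(x,z_2,..,az_i,..)=a\,\omega(x,z_2,..,z_i,..)$ ($a\in A$). Differentials: $\mathrm{d}^0(m)(x)=x\cdot m$; $\mathrm{d}^1\psi=(\mathrm{d}_{\rm CE}\psi,\delta^1\psi)$, $\delta^1\psi(x)=\psi(x^{[2]})+x\cdot\psi(x)$; for $n\ge2$ $\mathrm{d}^n(\varphi,\omega)=(\mathrm{d}_{\rm CE}\varphi,\delta^n\omega)$ with $\mathrm{d}_{\rm CE}\varphi(x_1,..,x_{n+1})=\sum_{i<j}\varphi([x_i,x_j],x_1,..,\hat x_i,..,\hat x_j,..)+\sum_ix_i\cdot\varphi(x_1,..,\hat x_i,..)$ and $\delta^n\omega(x,z_2,..,z_n)=x\cdot\varphi(x,z_2,..,z_n)+\sum_{i=2}^nz_i\cdot\omega(x,..,\hat z_i,..)+\varphi(x^{[2]},z_2,..,z_n)+\sum_{i=2}^n\varphi([x,z_i],x,z_2,..,\hat z_i,..,z_n)+\sum_{2\le i<j\le n}\omega(x,[z_i,z_j],z_2,..,\hat z_i,..,\hat z_j,..,z_n)$. *)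

(* Defs.v *)
From HB Require Import structures.
From mathcomp Require Import all_boot all_order all_algebra.
From mathcomp Require Import zify.

Set Implicit Arguments.
Unset Strict Implicit.
Unset Printing Implicit Defensive.

Import Order.TTheory GRing.Theory.
Local Open Scope ring_scope.

Lemma delp_proof (m i : nat) (k : 'I_m.-1) : (bump i k < m)%N.
Proof. have := ltn_ord k; rewrite /bump; case: (i <= k)%N => /=; lia. Qed.

Definition delp {X : Type} {m : nat} (i : nat) (x : 'I_m -> X) : 'I_m.-1 -> X :=
  fun k => x (Ordinal (delp_proof i k)).

Lemma vcons_proof (m k : nat) : (k.+1 < m)%N -> (k < m.-1)%N.
Proof. lia. Qed.

Definition vcons {X : Type} {m : nat} (y : X) (z : 'I_m.-1 -> X) : 'I_m -> X :=
  fun k => match nat_of_ord k as v return (v < m)%N -> X with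
           | 0 => fun _ => y
           | k'.+1 => fun h => z (Ordinal (vcons_proof h))
           end (ltn_ord k).

Definition upd {X : Type} {m : nat} (x : 'I_m -> X) (i : 'I_m) (y : X) : 'I_m -> X :=
  fun j => if j == i then y else x j.

Section RLR.
Variables (K : fieldType) (A : comAlgType K) (L M : lmodType A).

(* The K-vector space structures of L and M are induced by A: k . x := k%:A *: x. *)

Definition is_rLR_algebra (br : L -> L -> L) (sq : L -> L) (th : L -> A -> A) : Prop :=
  (forall x y z, br (x + y) z = br x z + br y z) /\
  (forall x y z, br x (y + z) = br x y + br x z) /\
  (forall (k : K) x y, br (k%:A *: x) y = k%:A *: br x y) /\
  (forall (k : K) x y, br x (k%:A *: y) = k%:A *: br x y) /\
  (forall x, br x x = 0) /\
  (forall x y z, br x (br y z) + br y (br z x) + br z (br x y) = 0) /\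
  (forall (k : K) x, sq (k%:A *: x) = (k ^+ 2)%:A *: sq x) /\
  (forall x y, br (sq x) y = br x (br x y)) /\
  (forall x y, sq (x + y) = sq x + sq y + br x y) /\
  (forall x a b, th x (a + b) = th x a + th x b) /\
  (forall x (k : K) a, th x (k *: a) = k *: th x a) /\
  (forall x a b, th x (a * b) = a * th x b + th x a * b) /\
  (forall (a : A) x y c, th (a *: x + y) c = a * th x c + th y c) /\
  (forall x y c, th (br x y) c = th x (th y c) - th y (th x c)) /\
  (forall x c, th (sq x) c = th x (th x c)) /\
  (forall x (a : A) y, br x (a *: y) = a *: br x y + th x a *: y) /\
  (forall (a : A) x, sq (a *: x) = (a ^+ 2) *: sq x + th (a *: x) a *: x).

Definition is_rLR_module (br : L -> L -> L) (sq : L -> L) (th : L -> A -> A)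
  (rho : L -> M -> M) : Prop :=
  (forall x m m', rho x (m + m') = rho x m + rho x m') /\
  (forall x (k : K) m, rho x (k%:A *: m) = k%:A *: rho x m) /\
  (forall (a : A) x y m, rho (a *: x + y) m = a *: rho x m + rho y m) /\
  (forall x y m, rho (br x y) m = rho x (rho y m) - rho y (rho x m)) /\
  (forall x m, rho (sq x) m = rho x (rho x m)) /\
  (forall x (a : A) m, rho x (a *: m) = a *: rho x m + th x a *: m).

(* Alternating maps (characteristic 2: vanish when two arguments coincide). *)
Definition alternating {m : nat} (f : ('I_m -> L) -> M) : Prop :=
  forall (x : 'I_m -> L) (i j : 'I_m), i != j -> x i = x j -> f x = 0.

Definition multiadditive {m : nat} (f : ('I_m -> L) -> M) : Prop :=
  forall (x : 'I_m -> L) (i : 'I_m) (y y' : L),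
    f (upd x i (y + y')) = f (upd x i y) + f (upd x i y').

Definition A_multilinear {m : nat} (f : ('I_m -> L) -> M) : Prop :=
  multiadditive f /\
  forall (x : 'I_m -> L) (i : 'I_m) (a : A) (y : L),
    f (upd x i (a *: y)) = a *: f (upd x i y).

Definition K_multilinear {m : nat} (f : ('I_m -> L) -> M) : Prop :=
  multiadditive f /\
  forall (x : 'I_m -> L) (i : 'I_m) (k : K) (y : L),
    f (upd x i (k%:A *: y)) = k%:A *: f (upd x i y).

(* C^{n+2}_LR(L;M): pairs (phi, om) with phi : L^{n+2} -> M and
   om : L x L^n -> M satisfying the conditions of the paper. *)
Definition is_cochain (n : nat) (phi : ('I_n.+2 -> L) -> M)
  (om : L -> ('I_n -> L) -> M) : Prop :=
  alternating phi /\ A_multilinear phi /\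
  (forall x, alternating (om x)) /\ (forall x, K_multilinear (om x)) /\
  (forall (k : K) x z, om (k%:A *: x) z = (k ^+ 2)%:A *: om x z) /\
  (forall x y z, om (x + y) z = om x z + om y z + phi (vcons (m := n.+2) x (vcons (m := n.+1) y z))) /\
  (forall (a : A) x z, om (a *: x) z = (a ^+ 2) *: om x z) /\
  (forall x z (i : 'I_n) (a : A), om x (upd z i (a *: z i)) = a *: om x z).

(* Chevalley-Eilenberg differential (signs are irrelevant in char 2):
   d phi (x_1..x_{m+2}) = sum_{i<j} phi([x_i,x_j], x_1,..^i..^j..)
                          + sum_i x_i . phi(x_1,..^i..). *)
Definition dCE (br : L -> L -> L) (rho : L -> M -> M) (m : nat)
  (phi : ('I_m.+1 -> L) -> M) : ('I_m.+2 -> L) -> M :=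
  fun x =>
    \sum_(j < m.+2) \sum_(i < m.+1 | (i < j)%N)
        phi (vcons (m := m.+1) (br (x (widen_ord (leqnSn _) i)) (x j))
               (delp i (delp j x)))
    + \sum_(i < m.+2) rho (x i) (phi (delp i x)).

Definition delta (br : L -> L -> L) (sq : L -> L) (rho : L -> M -> M) (n : nat)
  (phi : ('I_n.+2 -> L) -> M) (om : L -> ('I_n -> L) -> M)
  : L -> ('I_n.+1 -> L) -> M :=
  fun x z =>
    rho x (phi (vcons (m := n.+2) x z))
    + \sum_(i < n.+1) rho (z i) (om x (delp i z))
    + phi (vcons (m := n.+2) (sq x) z)
    + \sum_(i < n.+1) phi (vcons (m := n.+2) (br x (z i)) (vcons (m := n.+1) x (delp i z)))
    + \sum_(j < n.+1) \sum_(i < n.+1 | (i < j)%N)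
        om x (vcons (m := n) (br (z i) (z j)) (delp i (delp j z))).

End RLR.

(* Main.v *)
Require Import Defs.
From HB Require Import structures.
From Stdlib Require Import FunctionalExtensionality.
From mathcomp Require Import all_boot all_order all_algebra.
From mathcomp Require Import zify ssrAC.
Set Implicit Arguments.
Unset Strict Implicit.
Unset Printing Implicit Defensive.
Import GRing.Theory.
Local Open Scope ring_scope.

Section Core.
Variables (K : fieldType) (A : comAlgType K) (L M : lmodType A).
Variables (br : L -> L -> L) (sq : L -> L) (th : L -> A -> A) (rho : L -> M -> M).
Hypothesis c2A : forall a : A, a + a = 0.
Hypothesis c2L : forall x : L, x + x = 0.
Hypothesis c2M : forall m : M, m + m = 0.
Hypothesis brDl : forall x y z, br (x + y) z = br x z + br y z.
Hypothesis brDr : forall x y z, br x (y + z) = br x y + br x z.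
Hypothesis brxx : forall x, br x x = 0.
Hypothesis jacobi : forall x y z, br x (br y z) + br y (br z x) + br z (br x y) = 0.
Hypothesis brsq : forall x y, br (sq x) y = br x (br x y).
Hypothesis sqD : forall x y, sq (x + y) = sq x + sq y + br x y.
Hypothesis sqZ : forall (a : A) x, sq (a *: x) = (a ^+ 2) *: sq x + th (a *: x) a *: x.
Hypothesis thM : forall x a b, th x (a * b) = a * th x b + th x a * b.
Hypothesis thL : forall (a : A) x y c, th (a *: x + y) c = a * th x c + th y c.
Hypothesis brZr : forall x (a : A) y, br x (a *: y) = a *: br x y + th x a *: y.
Hypothesis rhoDr : forall x m m', rho x (m + m') = rho x m + rho x m'.
Hypothesis rhoL : forall (a : A) x y m, rho (a *: x + y) m = a *: rho x m + rho y m.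
Hypothesis rho_br : forall x y m, rho (br x y) m = rho x (rho y m) - rho y (rho x m).
Hypothesis rho_sq : forall x m, rho (sq x) m = rho x (rho x m).
Hypothesis rhoZr : forall x (a : A) m, rho x (a *: m) = a *: rho x m + th x a *: m.

Lemma oppM (m : M) : - m = m.
Proof. by apply/eqP; rewrite eq_sym -subr_eq0 opprK c2M. Qed.
Lemma eqM (u v : M) : u + v = 0 -> u = v.
Proof. by move/eqP; rewrite addr_eq0 oppM => /eqP. Qed.
Lemma oppL (m : L) : - m = m.
Proof. by apply/eqP; rewrite eq_sym -subr_eq0 opprK c2L. Qed.
Lemma eqL (u v : L) : u + v = 0 -> u = v.
Proof. by move/eqP; rewrite addr_eq0 oppL => /eqP. Qed.
Lemma eqA (u v : A) : u + v = 0 -> u = v.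
Proof. move/eqP; rewrite addr_eq0 => /eqP ->; apply/eqP. 
  by rewrite eq_sym -subr_eq0 opprK c2A. Qed.

Lemma dbl0 (V : zmodType) (u : V) : u = u + u -> u = 0.
Proof. by move=> h; apply: (addrI u); rewrite addr0 -h. Qed.
Lemma br0l y : br 0 y = 0.
Proof. by apply: dbl0; rewrite -brDl addr0. Qed.
Lemma br0r y : br y 0 = 0.
Proof. by apply: dbl0; rewrite -brDr addr0. Qed.
Lemma brC x y : br x y = br y x.
Proof. apply: eqL. have := brxx (x + y). by rewrite brDl !brDr !brxx add0r addr0. Qed.
Lemma brZl (a : A) x y : br (a *: x) y = a *: br x y + th y a *: x.
Proof. by rewrite brC brZr brC. Qed.
Lemma jac a b c : br (br a b) c = br a (br b c) + br b (br a c).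
Proof.
apply: eqL; rewrite [br (br a b) c]brC [br a c]brC.
by rewrite addrC jacobi.
Qed.
Lemma rho0l m : rho 0 m = 0.
Proof. by apply: dbl0; have := rhoL 1 0 0 m; rewrite scaler0 addr0 scale1r. Qed.
Lemma rho0r x : rho x 0 = 0.
Proof. by apply: dbl0; rewrite -rhoDr addr0. Qed.
Lemma rhoDl x y m : rho (x + y) m = rho x m + rho y m.
Proof. by have := rhoL 1 x y m; rewrite !scale1r. Qed.
Lemma rhoZl (a : A) x m : rho (a *: x) m = a *: rho x m.
Proof. by have := rhoL a x 0 m; rewrite addr0 rho0l addr0. Qed.
Lemma rho_br' x y m : rho (br x y) m = rho x (rho y m) + rho y (rho x m).
Proof. by rewrite rho_br oppM. Qed.
Lemma th0 c : th 0 c = 0.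
Proof. by apply: dbl0; have := thL 1 0 0 c; rewrite scaler0 addr0 mul1r. Qed.
Lemma thZl (a : A) x c : th (a *: x) c = a * th x c.
Proof. by have := thL a x 0 c; rewrite addr0 th0 addr0. Qed.
Lemma th_sqr x (a : A) : th x (a ^+ 2) = 0.
Proof. by rewrite expr2 thM mulrC c2A. Qed.


Lemma sum_sym_diag n (F : nat -> nat -> M) :
  (forall k l, (k < n)%N -> (l < n)%N -> F k l = F l k) ->
  \sum_(k < n) \sum_(l < n) F k l = \sum_(k < n) F k k.
Proof.
move=> Fs.
have E : forall k : 'I_n, \sum_(l < n) F k l = F k k +
   (\sum_(l < n) (if (l < k)%N then F k l else 0) +
    \sum_(l < n) (if (k < l)%N then F k l else 0)).
  move=> k; rewrite -big_split /= [LHS](bigD1 k) //= [in RHS](bigD1 k) //= ltnn !add0r.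
  congr (_ + _); apply: eq_bigr => l /= lk; case: ltngtP => //.
  - by rewrite addr0.
  - by rewrite add0r.
  - by move=> e; move: lk; rewrite -(inj_eq val_inj) /= e eqxx.
rewrite (eq_bigr _ (fun k _ => E k)) big_split /= big_split /=.
suff -> : \sum_(k < n) \sum_(l < n) (if (k < l)%N then F k l else 0) =
          \sum_(k < n) \sum_(l < n) (if (l < k)%N then F k l else 0).
  by rewrite c2M addr0.
rewrite exchange_big /=; apply: eq_bigr => k _; apply: eq_bigr => l _.
by case: ifP => // _; rewrite Fs.
Qed.

Lemma sum_swap_diag n (F G : nat -> nat -> M) :
  (forall k l, (k < n)%N -> (l < n)%N -> k != l -> F k l = G l k) ->
  \sum_(k < n) \sum_(l < n) F k l + \sum_(k < n) \sum_(l < n) G k l =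
  \sum_(k < n) (F k k + G k k).
Proof.
move=> FG.
rewrite [X in _ + X]exchange_big /= -big_split /=; apply: eq_bigr => k _.
rewrite -big_split /= (bigD1 k) //= big1 ?addr0 // => l lk.
by rewrite FG // ?c2M // eq_sym.
Qed.

Definition remat (i : nat) (s : seq L) := take i s ++ drop i.+1 s.

Definition LLdef (a : L) (f : seq L -> M) (t : seq L) : M :=
  rho a (f t) + \sum_(0 <= k < size t) f (set_nth 0 t k (br a t`_k)).
Fact LL_key : unit. Proof. exact: tt. Qed.
Definition LL := locked_with LL_key LLdef.
Lemma LLE' : LL = LLdef.
Proof. by rewrite /LL unlock. Qed.

Fixpoint dd (u : seq L) (f : seq L -> M) : M :=
  match u with
  | [::] => 0
  | a :: t => LL a f t + dd t (fun v => f (a :: v))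
  end.

Definition MA k (f : seq L -> M) := forall u i x y, size u = k -> (i < k)%N ->
  f (set_nth 0 u i (x + y)) = f (set_nth 0 u i x) + f (set_nth 0 u i y).

Lemma size_set_nth_lt (s : seq L) k y : (k < size s)%N -> size (set_nth 0 s k y) = size s.
Proof. by move=> h; rewrite size_set_nth; apply/maxn_idPr. Qed.

Lemma LL_ext a f g t : (forall v, size v = size t -> f v = g v) -> LL a f t = LL a g t.
Proof.
move=> fg; rewrite LLE' /LLdef fg //; congr (_ + _); rewrite !big_mkord; apply: eq_bigr => k _.
by rewrite fg // size_set_nth_lt.
Qed.

Lemma LL_add a f g t : LL a (fun v => f v + g v) t = LL a f t + LL a g t.
Proof.
rewrite LLE' /LLdef rhoDr big_split /=.
by rewrite -!addrA; congr (_ + _); rewrite addrCA.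
Qed.

Lemma LL_cons a f b t : LL a f (b :: t) = LL a (fun v => f (b :: v)) t + f (br a b :: t).
Proof.
by rewrite LLE' /LLdef /= big_nat_recl //= addrAC -!addrA; congr (_ + _).
Qed.

Lemma dd_ext u f g : (forall v, (size v).+1 = size u -> f v = g v) -> dd u f = dd u g.
Proof.
elim: u f g => [//|a t IH] f g fg /=; congr (_ + _).
  by apply: LL_ext => v sv; apply: fg; rewrite sv.
by apply: IH => v sv; apply: fg; rewrite /= sv.
Qed.

Lemma dd_add u f g : dd u (fun v => f v + g v) = dd u f + dd u g.
Proof.
elim: u f g => [|a t IH] f g /=; first by rewrite addr0.
rewrite LL_add (IH (fun v => f (a :: v)) (fun v => g (a :: v))).
by rewrite addrACA.
Qed.

Lemma dd0 u : dd u (fun _ => 0) = 0.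
Proof. by apply: dbl0; rewrite -dd_add; apply: dd_ext => v _; rewrite addr0. Qed.

Lemma MA0 f : MA 0 f.
Proof. by []. Qed.

Lemma MA_cons k f b : MA k.+1 f -> MA k (fun v => f (b :: v)).
Proof. by move=> h u i x y su ik; apply: (h (b :: u) i.+1) => //=; rewrite su. Qed.

Lemma MA_consP k f b : MA k f -> MA k.-1 (fun v => f (b :: v)).
Proof. by case: k => [|k] h //; apply: MA_cons. Qed.

Lemma MA_f0 k f u i : MA k f -> size u = k -> (i < k)%N -> f (set_nth 0 u i 0) = 0.
Proof. by move=> h su ik; apply: dbl0; rewrite -h // addr0. Qed.

Lemma LL_addl x y f t : MA (size t) f -> LL (x + y) f t = LL x f t + LL y f t.
Proof.
move=> hf; rewrite LLE' /LLdef rhoDl -!addrA; congr (_ + _); rewrite addrCA; congr (_ + _).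
rewrite -big_split /= !big_mkord; apply: eq_bigr => k _.
by rewrite brDl hf.
Qed.

Lemma rho_sum a I (r : seq I) (P : pred I) (F : I -> M) :
  rho a (\sum_(i <- r | P i) F i) = \sum_(i <- r | P i) rho a (F i).
Proof. exact: (big_morph (rho a) (rhoDr a) (rho0r a)). Qed.

Lemma ac4 (x1 x2 x3 x4 y1 y2 y3 y4 : M) :
  (x1 + x2 + x3 + x4) + (y1 + y2 + y3 + y4) =
  (x1 + y1) + (x2 + y3) + (x3 + y2) + (x4 + y4).
Proof.
rewrite addrACA; congr (_ + _).
by rewrite [y1 + y2 + y3]addrAC (addrACA (x1 + x2)) (addrACA x1).
Qed.

Lemma nsn_eq (s : seq L) k y : (set_nth 0 s k y)`_k = y.
Proof. by rewrite nth_set_nth /= eqxx. Qed.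
Lemma nsn_neq (s : seq L) k l y : l != k -> (set_nth 0 s k y)`_l = s`_l.
Proof. by rewrite nth_set_nth /= => /negbTE ->. Qed.
Lemma ssn_eq (s : seq L) k y z : set_nth 0 (set_nth 0 s k y) k z = set_nth 0 s k z.
Proof. by rewrite set_set_nth eqxx. Qed.
Lemma ssn_neq (s : seq L) k l y z : k != l ->
  set_nth 0 (set_nth 0 s k y) l z = set_nth 0 (set_nth 0 s l z) k y.
Proof. by rewrite set_set_nth => /negbTE ->. Qed.

Definition Fab (f : seq L -> M) t a b (k l : nat) :=
  f (set_nth 0 (set_nth 0 t k (br a t`_k)) l (br b (set_nth 0 t k (br a t`_k))`_l)).

Lemma LL_LL a b f t : LL a (LL b f) t =
  rho a (rho b (f t)) + \sum_(l < size t) rho a (f (set_nth 0 t l (br b t`_l)))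
  + \sum_(k < size t) rho b (f (set_nth 0 t k (br a t`_k)))
  + \sum_(k < size t) \sum_(l < size t) Fab f t a b k l.
Proof.
rewrite LLE' /LLdef rhoDr rho_sum !big_mkord -!addrA; congr (_ + (_ + _)).
rewrite -big_split /=; apply: eq_bigr => k _.
by rewrite size_set_nth_lt // big_mkord.
Qed.

Lemma LL_comm_sum a b f t : MA (size t) f ->
  LL a (LL b f) t + LL b (LL a f) t = LL (br a b) f t.
Proof.
move=> hf; rewrite !LL_LL ac4 !c2M !addr0 -rho_br'.
rewrite LLE' /LLdef big_mkord; congr (_ + _).
rewrite sum_swap_diag.
  apply: eq_bigr => k _.
  rewrite /Fab !nsn_eq !ssn_eq -hf //.
  by rewrite jac addrC.
move=> k l kt lt kl; rewrite /Fab nsn_neq 1?eq_sym // nsn_neq //.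
by rewrite ssn_neq.
Qed.

Lemma LL_comm a b f t : MA (size t) f ->
  LL a (LL b f) t = LL b (LL a f) t + LL (br a b) f t.
Proof. move=> hf; rewrite -LL_comm_sum // addrCA c2M addr0 //. Qed.

Lemma LL_sq x f t : MA (size t) f -> LL x (LL x f) t = LL (sq x) f t.
Proof.
move=> hf; rewrite LL_LL -(addrA (rho _ _)) c2M addr0 -rho_sq LLE' /LLdef big_mkord; congr (_ + _).
rewrite sum_sym_diag.
  apply: eq_bigr => k _.
  by rewrite /Fab !nsn_eq !ssn_eq brsq.
move=> k l kt lt; case: (eqVneq k l) => [-> //|kl].
rewrite /Fab nsn_neq 1?eq_sym // nsn_neq //.
by rewrite ssn_neq.
Qed.

Lemma dd_cons a t f : dd (a :: t) f = LL a f t + dd t (fun v => f (a :: v)).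
Proof. by []. Qed.

Lemma LL_dd u a f : MA (size u).-1 f ->
  LL a (fun v => dd v f) u = dd u (LL a f).
Proof.
elim: u f => [|b t IH] f hf.
  by rewrite LLE' /LLdef /= big_geq // addr0 rho0r.
have hf' : MA (size t) f by [].
rewrite LL_cons dd_cons.
rewrite (@LL_ext _ _ (fun v => LL b f v + dd v (fun w => f (b :: w))) _) //.
rewrite LL_add IH; last exact: MA_consP.
rewrite dd_cons (@dd_ext t (fun v => LL a f (b :: v)) (fun v => LL a (fun w => f (b :: w)) v + f (br a b :: v))); last first.
  by move=> v _; rewrite LL_cons.
rewrite dd_add LL_comm //.
rewrite -!addrA; congr (_ + _); rewrite addrCA; congr (_ + _).
by rewrite addrA c2M add0r.
Qed.

Lemma dd_dd u f : MA (size u).-2 f -> dd u (fun v => dd v f) = 0.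
Proof.
elim: u f => [//|a t IH] f hf.
rewrite dd_cons LL_dd; last by case: t hf IH.
rewrite (@dd_ext t (fun v => dd (a :: v) f) (fun v => LL a f v + dd v (fun w => f (a :: w)))) //.
rewrite dd_add IH ?addr0 ?c2M //.
by case: t hf IH => [|b t] //= hf _; apply: MA_consP.
Qed.

Definition Dl (f g : seq L -> M) (x : L) (t : seq L) : M :=
  LL x (fun v => f (x :: v)) t + f (sq x :: t) + dd t g.

Lemma Dl_Dl t x f g : MA (size t) f -> MA (size t).-2 g ->
  Dl (fun v => dd v f) (Dl f g x) x t = 0.
Proof.
move=> hf hg; rewrite /Dl.
rewrite (@LL_ext _ _ (fun v => LL x f v + dd v (fun w => f (x :: w))) _) //.
rewrite LL_add LL_dd; last exact: MA_consP.
rewrite LL_sq // dd_cons !dd_add dd_dd // addr0.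
by rewrite (addrACA (LL (sq x) f t)) c2M add0r c2M.
Qed.

Definition Sym k (f : seq L -> M) := forall s t, size s = k -> perm_eq s t -> f s = f t.
Definition swp i (s : seq L) := set_nth 0 (set_nth 0 s i s`_i.+1) i.+1 s`_i.

Lemma perm_swap2 (a b : L) r : perm_eq (a :: b :: r) (b :: a :: r).
Proof. by rewrite -[a :: b :: r]/([:: a] ++ [:: b] ++ r) perm_catCA. Qed.

Lemma perm_swp i s : (i.+1 < size s)%N -> perm_eq (swp i s) s.
Proof.
elim: s i => [//|a s IH] [|i] /=.
  by case: s IH => [//|b s] _ _; rewrite /swp /=; apply: perm_swap2.
by move=> h; rewrite /swp /= perm_cons; apply: IH.
Qed.

Lemma size_swp i s : (i.+1 < size s)%N -> size (swp i s) = size s.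
Proof. by move=> h; rewrite /swp !size_set_nth_lt // ?size_set_nth_lt // ltnW. Qed.

Lemma perm_set_nth (t : seq L) q y : (q < size t)%N ->
  perm_eq (set_nth 0 t q y) (y :: remat q t).
Proof.
elim: t q => [//|a t IH] [|q] /= h; first by rewrite /remat /= drop0.
rewrite /remat /=; apply: perm_trans (perm_swap2 _ _ _).
by rewrite perm_cons; apply: IH.
Qed.

Lemma set_nth_id (t : seq L) q : (q < size t)%N -> set_nth 0 t q t`_q = t.
Proof. by elim: t q => [//|a t IH] [|q] //= h; rewrite IH. Qed.

Lemma size_remat (t : seq L) q : (q < size t)%N -> size (remat q t) = (size t).-1.
Proof.
move=> h; rewrite /remat size_cat size_take h size_drop; lia.
Qed.

Lemma nth_remat (s : seq L) i k : (remat i s)`_k = s`_(bump i k).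
Proof.
rewrite /remat nth_cat size_take /bump.
case: (ltnP i (size s)) => his.
  case: (ltnP k i) => ki.
    by rewrite add0n nth_take.
  rewrite nth_drop add1n; congr nth; lia.
case: (ltnP k (size s)) => ks.
  have -> : (i <= k)%N = false by apply/negbTE; rewrite -ltnNge; exact: leq_trans ks his.
  by rewrite add0n nth_take // (leq_trans ks his).
have hb : (size s <= (i <= k)%N + k)%N by case: (i <= k)%N; rewrite ?add0n ?add1n; lia.
rewrite !nth_default // size_drop.
by have /eqP -> : (size s - i.+1 == 0)%N by rewrite subn_eq0 leqW.
Qed.

Lemma perm_remat (t : seq L) q : (q < size t)%N -> perm_eq t (t`_q :: remat q t).
Proof. by move=> h; rewrite -{1}(set_nth_id h) perm_set_nth. Qed.

Lemma Sym0 f : Sym 0 f.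
Proof. by move=> [|] // t _ /perm_size/esym/size0nil ->. Qed.

Lemma move_front t1 a t2 (f : seq L -> M) :
  (forall s i, size s = size (t1 ++ a :: t2) -> (i.+1 < size s)%N -> f (swp i s) = f s) ->
  f (t1 ++ a :: t2) = f (a :: t1 ++ t2).
Proof.
elim: t1 f => [//|b t1 IH] f h /=.
rewrite (IH (fun v => f (b :: v))); last first.
  by move=> s i ss si; apply: (h (b :: s) i.+1) => //=; rewrite ss.
have := h (a :: b :: t1 ++ t2) 0%N; rewrite /swp /= => -> //.
by rewrite size_cat /= size_cat /= addnS.
Qed.

Lemma SymCrit k f : (forall s i, size s = k -> (i.+1 < k)%N -> f (swp i s) = f s) -> Sym k f.
Proof.
elim: k f => [|k IH] f h; first exact: Sym0.
move=> [//|a s] t /= [ss] pst.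
have ha : a \in t by rewrite -(perm_mem pst) mem_head.
move: pst; case/splitPr: ha => t1 t2 pst.
have st : size (t1 ++ a :: t2) = k.+1 by rewrite -(perm_size pst) /= ss.
rewrite move_front; last first.
  by move=> s' i ss' si; apply: h; [rewrite ss' st | rewrite -st -ss'].
have ps : perm_eq s (t1 ++ t2).
  rewrite -(perm_cons a); apply: perm_trans pst _.
  by rewrite -[t1 ++ a :: t2]/(t1 ++ [:: a] ++ t2) perm_catCA.
apply: (IH (fun v => f (a :: v))) => //.
by move=> s' i ss' si; apply: (h (a :: s') i.+1) => //=; rewrite ss'.
Qed.

Lemma SymCrit' k f :
  (forall b c s, (size s).+2 = k -> f (b :: c :: s) = f (c :: b :: s)) ->
  (forall b, Sym k.-1 (fun v => f (b :: v))) -> Sym k f.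
Proof.
move=> h1 h2; apply: SymCrit => s0 i ss ik.
case: s0 ss ik => [|b s] ss ik; first by rewrite -ss in ik.
case: i ik => [|i] ik.
  case: s ss ik => [|c s] /= ss ik; first (by move: ik; rewrite -ss).
  by rewrite /swp /= (h1 c b s).
have hs : size s = k.-1 by rewrite -ss.
have ps : perm_eq s (swp i s).
  by rewrite perm_sym; apply: perm_swp; rewrite -ltnS -[(size s).+1]/(size (b :: s)) ss.
by have /= -> := h2 b s _ hs ps.
Qed.

Lemma Sym_cons k f b : Sym k.+1 f -> Sym k (fun v => f (b :: v)).
Proof. by move=> h s t ss pst; apply: h; rewrite /= ?ss ?perm_cons. Qed.

Lemma Sym_consP k f b : Sym k f -> Sym k.-1 (fun v => f (b :: v)).
Proof. by case: k => [|k] h; [apply: Sym0 | apply: Sym_cons]. Qed.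

Lemma Sym_set k f u i y : Sym k f -> size u = k -> (i < k)%N ->
  f (set_nth 0 u i y) = f (y :: remat i u).
Proof.
move=> h su ik; apply: h; last by apply: perm_set_nth; rewrite su.
by rewrite size_set_nth_lt // su.
Qed.

Lemma Sym_sw k f b c s : Sym k f -> (size s).+2 = k -> f (b :: c :: s) = f (c :: b :: s).
Proof. by move=> h ss; apply: h => //; apply: perm_swap2. Qed.

Lemma Sym_add k f g : Sym k f -> Sym k g -> Sym k (fun v => f v + g v).
Proof. by move=> hf hg s t ss pst; rewrite (hf s t) // (hg s t). Qed.

Definition Alt k (f : seq L -> M) := forall a s, (size s).+2 = k -> f (a :: a :: s) = 0.
Definition Hom k (f : seq L -> M) := forall u i (c : A), size u = k -> (i < k)%N ->
  f (set_nth 0 u i (c *: u`_i)) = c *: f u.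

Lemma Sym_eq k f g : (forall v, f v = g v) -> Sym k g -> Sym k f.
Proof. by move=> e h s t ss pst; rewrite !e; apply: h. Qed.

Lemma MA_at0 k f x y s : MA k f -> (size s).+1 = k -> f ((x + y) :: s) = f (x :: s) + f (y :: s).
Proof. by move=> h ss; apply: (h (x :: s) 0%N) => //; rewrite -ss. Qed.

Lemma Hom_at0 k f c x s : Hom k f -> (size s).+1 = k -> f (c *: x :: s) = c *: f (x :: s).
Proof. by move=> h ss; apply: (h (x :: s) 0%N) => //; rewrite -ss. Qed.

Lemma Hom_set k f t i c y : Hom k f -> size t = k -> (i < k)%N ->
  f (set_nth 0 t i (c *: y)) = c *: f (set_nth 0 t i y).
Proof.
move=> h st ik; have := h (set_nth 0 t i y) i c; rewrite nsn_eq ssn_eq => -> //.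
by rewrite size_set_nth_lt // st.
Qed.

Lemma MA_of0 k f : Sym k f ->
  (forall x y s, (size s).+1 = k -> f ((x + y) :: s) = f (x :: s) + f (y :: s)) -> MA k f.
Proof.
move=> hs h u i x y su ik; rewrite !(Sym_set _ hs su ik) h //.
by rewrite size_remat su //; lia.
Qed.

Lemma Hom_of0 k f : Sym k f ->
  (forall c x s, (size s).+1 = k -> f (c *: x :: s) = c *: f (x :: s)) -> Hom k f.
Proof.
move=> hs h u i c su ik; rewrite (Sym_set _ hs su ik) h; last first.
  by rewrite size_remat su //; lia.
by congr (_ *: _); apply: esym; apply: hs => //; apply: perm_remat; rewrite su.
Qed.

Lemma AltSym k f : Sym k f -> Alt k f -> forall u i j, size u = k -> (i < k)%N -> (j < k)%N ->
  i != j -> u`_i = u`_j -> f u = 0.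
Proof.
move=> hs ha.
suff H : forall u i j, size u = k -> (i < j)%N -> (j < k)%N -> u`_i = u`_j -> f u = 0.
  move=> u i j su ik jk; case: ltngtP => // ij _ e; first exact: (H u i j).
  exact: (H u j i).
move=> u i j su ij jk e.
have p1 : perm_eq u (u`_j :: remat j u) by apply: perm_remat; rewrite su.
have p2 : perm_eq (remat j u) (u`_i :: remat i (remat j u)).
  have -> : u`_i = (remat j u)`_i by rewrite nth_remat /bump leqNgt ij.
  by apply: perm_remat; rewrite size_remat su //; lia.
rewrite (hs u (u`_j :: u`_i :: remat i (remat j u))) //; last first.
  by apply: perm_trans p1 _; rewrite perm_cons.
rewrite e; apply: ha; rewrite !size_remat ?su //; try lia.
Qed.

Lemma LL0 x t : LL x (fun _ => 0) t = 0.
Proof. by rewrite LLE' /LLdef rho0r add0r big1. Qed.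

Lemma LL_Sym k a f : Sym k f -> Sym k (LL a f).
Proof.
elim: k f => [|k IH] f hs; first exact: Sym0.
apply: SymCrit' => [b c s ss|b].
  rewrite !LL_cons.
  rewrite (@LL_ext a (fun v => f (b :: c :: v)) (fun v => f (c :: b :: v)) s); last first.
    by move=> v sv; apply: (Sym_sw _ _ hs); rewrite sv.
  rewrite (Sym_sw _ (br a c) hs) ?(Sym_sw _ (br a b) hs) //.
  by rewrite -addrA [X in _ + X]addrC addrA.
apply: (@Sym_eq _ _ (fun v => LL a (fun w => f (b :: w)) v + f (br a b :: v))).
  by move=> v; rewrite LL_cons.
by apply: Sym_add; [apply: IH; apply: Sym_cons | apply: Sym_cons].
Qed.

Lemma dd_Sym k f : Sym k f -> Sym k.+1 (fun u => dd u f).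
Proof.
elim: k f => [|k IH] f hs.
  apply: SymCrit' => [b c s //|b]; exact: Sym0.
apply: SymCrit' => [b c s ss|b].
  rewrite !dd_cons !LL_cons.
  rewrite (@dd_ext s (fun v => f (b :: c :: v)) (fun v => f (c :: b :: v))); last first.
    by move=> v sv; apply: (Sym_sw _ _ hs); rewrite /=; lia.
  by rewrite brC addrACA [in RHS]addrACA [LL b _ _ + _]addrC.
apply: (@Sym_eq _ _ (fun v => LL b f v + dd v (fun w => f (b :: w)))) => //.
by apply: Sym_add; [apply: LL_Sym | apply: IH; apply: Sym_cons].
Qed.

Lemma Alt_cons k f b : Sym k.+1 f -> Alt k.+1 f -> Alt k (fun v => f (b :: v)).
Proof.
move=> hs ha a s ss /=.
have p : perm_eq (b :: a :: a :: s) (a :: a :: b :: s).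
  by have := perm_catCA [:: b] [:: a; a] s => /permPl.
by rewrite (hs _ _ _ p) ?ha //= ss.
Qed.

Lemma LL_Alt k x f : Sym k f -> Alt k f -> Alt k (LL x f).
Proof.
move=> hs ha a s ss; rewrite !LL_cons.
rewrite (@LL_ext x _ (fun _ => 0)); last by move=> v sv; apply: ha; rewrite /= sv.
by rewrite LL0 add0r (Sym_sw _ _ hs) ?c2M.
Qed.

Lemma f0 k f s : MA k f -> (size s).+1 = k -> f (0 :: s) = 0.
Proof. by move=> hm ss; apply: dbl0; rewrite -(MA_at0 _ _ hm ss) addr0. Qed.

Lemma dd_Alt k f : Sym k f -> MA k f -> Alt k f -> Alt k.+1 (fun u => dd u f).
Proof.
move=> hs hm ha a s ss; rewrite !dd_cons LL_cons brxx (f0 hm); last by case: ss.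
rewrite (@dd_ext s _ (fun _ => 0)); last by move=> v sv; apply: ha; rewrite /= sv; case: ss.
by rewrite dd0 !addr0 c2M.
Qed.

Lemma LL_MA k a f : Sym k f -> MA k f -> MA k (LL a f).
Proof.
move=> hs hm; apply: MA_of0 => [|x y s ss]; first exact: LL_Sym.
rewrite !LL_cons brDr (MA_at0 _ _ hm ss).
rewrite (@LL_ext a _ (fun v => f (x :: v) + f (y :: v))); last first.
  by move=> v sv; apply: (MA_at0 _ _ hm); rewrite sv.
by rewrite LL_add addrACA.
Qed.

Lemma dd_MA k f : Sym k f -> MA k f -> MA k.+1 (fun u => dd u f).
Proof.
move=> hs hm; apply: MA_of0 => [|x y s ss]; first exact: dd_Sym.
case: ss => ss; rewrite !dd_cons LL_addl ?ss //.
rewrite (@dd_ext s _ (fun v => f (x :: v) + f (y :: v))); last first.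
  by move=> v sv; apply: (MA_at0 _ _ hm); rewrite sv.
by rewrite dd_add addrACA.
Qed.

Lemma LL_scale a g (c : A) t : LL a (fun v => c *: g v) t = c *: LL a g t + th a c *: g t.
Proof.
rewrite LLE' /LLdef rhoZr scalerDr scaler_sumr addrAC.
by congr (_ + _).
Qed.

Lemma LL_scalel (c : A) x f t : MA (size t) f -> Hom (size t) f ->
  LL (c *: x) f t = c *: LL x f t + \sum_(0 <= k < size t) th t`_k c *: f (set_nth 0 t k x).
Proof.
move=> hm hh; rewrite LLE' /LLdef rhoZl scalerDr scaler_sumr -addrA; congr (_ + _).
rewrite -big_split; apply: eq_big_nat => k /andP[_ kt] /=.
by rewrite brZl hm // !(Hom_set _ _ hh).
Qed.

Lemma dd_scale (c : A) g t :
  dd t (fun v => c *: g v) = c *: dd t g + \sum_(0 <= p < size t) th t`_p c *: g (remat p t).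
Proof.
elim: t g => [|b t IH] g /=; first by rewrite scaler0 big_geq // addr0.
rewrite LL_scale (IH (fun v => g (b :: v))) big_nat_recl //= scalerDr.
rewrite /remat /= drop0.
by rewrite addrACA.
Qed.

Lemma LL_Hom k a f : Sym k f -> MA k f -> Hom k f -> Hom k (LL a f).
Proof.
move=> hs hm hh; apply: Hom_of0 => [|c x s ss]; first exact: LL_Sym.
rewrite !LL_cons brZr (MA_at0 _ _ hm ss) !(Hom_at0 _ _ hh ss).
rewrite (@LL_ext a _ (fun v => c *: f (x :: v))); last first.
  by move=> v sv; apply: (Hom_at0 _ _ hh); rewrite sv.
by rewrite LL_scale addrACA c2M addr0 scalerDr.
Qed.

Lemma dd_Hom k f : Sym k f -> MA k f -> Hom k f -> Hom k.+1 (fun u => dd u f).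
Proof.
move=> hs hm hh; apply: Hom_of0 => [|c x s ss]; first exact: dd_Sym.
case: ss => ss; rewrite !dd_cons LL_scalel ?ss //.
rewrite (@dd_ext s _ (fun v => c *: f (x :: v))); last first.
  by move=> v sv; apply: (Hom_at0 _ _ hh); rewrite sv.
rewrite dd_scale addrACA scalerDr.
suff -> : \sum_(0 <= k0 < k) th s`_k0 c *: f (set_nth 0 s k0 x) =
          \sum_(0 <= p < size s) th s`_p c *: f (x :: remat p s).
  by rewrite c2M addr0.
by rewrite -ss; apply: eq_big_nat => p /andP[_ ps]; rewrite (Sym_set _ hs ss) // -ss.
Qed.

Definition Good k f := [/\ Sym k f, MA k f, Alt k f & Hom k f].

Lemma Hom_cons k f b : Hom k.+1 f -> Hom k (fun v => f (b :: v)).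
Proof. by move=> h u i c su ik; apply: (h (b :: u) i.+1) => //=; rewrite su. Qed.

Lemma Good_eq k f g : (forall v, f v = g v) -> Good k g -> Good k f.
Proof.
move=> e [hs hm ha hh]; split.
- exact: Sym_eq hs.
- by move=> u i x y su ik; rewrite !e hm.
- by move=> a s ss; rewrite e ha.
- by move=> u i c su ik; rewrite !e hh.
Qed.

Lemma Good_add k f g : Good k f -> Good k g -> Good k (fun v => f v + g v).
Proof.
move=> [hs hm ha hh] [gs gm ga gh]; split.
- exact: Sym_add.
- by move=> u i x y su ik; rewrite hm // gm // addrACA.
- by move=> a s ss; rewrite ha // ga // addr0.
- by move=> u i c su ik; rewrite hh // gh // scalerDr.
Qed.

Lemma Good_cons k f b : Good k.+1 f -> Good k (fun v => f (b :: v)).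
Proof.
move=> [hs hm ha hh]; split.
- exact: Sym_cons.
- exact: MA_cons.
- exact: Alt_cons.
- exact: Hom_cons.
Qed.

Lemma Good_LL k x f : Good k f -> Good k (LL x f).
Proof.
move=> [hs hm ha hh]; split.
- exact: LL_Sym.
- exact: LL_MA.
- exact: LL_Alt.
- exact: LL_Hom.
Qed.

Lemma Good_dd k f : Good k f -> Good k.+1 (fun u => dd u f).
Proof.
move=> [hs hm ha hh]; split.
- exact: dd_Sym.
- exact: dd_MA.
- exact: dd_Alt.
- exact: dd_Hom.
Qed.

Lemma Good_Dl k f g x : Good k.+2 f -> Good k g -> Good k.+1 (Dl f g x).
Proof.
move=> hf hg; apply: (@Good_eq _ _ (fun t => LL x (fun v => f (x :: v)) t + f (sq x :: t) + dd t g)); first by move=> v.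
apply: Good_add; last exact: Good_dd.
by apply: Good_add; [apply: Good_LL; apply: Good_cons | apply: Good_cons].
Qed.

Lemma Dl_addx k f g gx gy x y t : Sym k.+1 f -> MA k.+1 f -> size t = k ->
  (forall v, (size v).+1 = k -> g v = gx v + gy v + f (x :: y :: v)) ->
  Dl f g (x + y) t = Dl f gx x t + Dl f gy y t + dd (x :: y :: t) f.
Proof.
move=> hs hm st hg; rewrite /Dl.
rewrite (@LL_ext (x + y) _ (fun v => f (x :: v) + f (y :: v))); last first.
  by move=> v sv; apply: (MA_at0 _ _ hm); rewrite sv st.
have hmx : MA (size t) (fun v => f (x :: v)) by rewrite st; apply: MA_cons.
have hmy : MA (size t) (fun v => f (y :: v)) by rewrite st; apply: MA_cons.
rewrite LL_add !LL_addl //.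
rewrite sqD !(MA_at0 _ _ hm) ?st //.
rewrite (@dd_ext t _ (fun v => gx v + gy v + f (x :: y :: v))); last first.
  by move=> v sv; apply: hg; rewrite sv st.
rewrite !dd_add !dd_cons LL_cons.
set a1 := LL x (fun v => f (x :: v)) t.
set a2 := LL y (fun v => f (x :: v)) t.
set a3 := LL x (fun v => f (y :: v)) t.
set a4 := LL y (fun v => f (y :: v)) t.
set b1 := f (sq x :: t). set b2 := f (sq y :: t). set b3 := f (br x y :: t).
set d1 := dd t gx. set d2 := dd t gy. set d3 := dd t (fun v => f (x :: y :: v)).
by rewrite !addrA [LHS](ACl (1*5*8*4*6*9*3*7*2*10)).
Qed.


Lemma Dl_scalex k f g g' (c : A) x t : Good k.+1 f -> size t = k ->
  (forall v, (size v).+1 = k -> g' v = (c ^+ 2) *: g v) ->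
  Dl f g' (c *: x) t = (c ^+ 2) *: Dl f g x t.
Proof.
move=> [hs hm ha hh] st hg; rewrite /Dl.
rewrite (@LL_ext (c *: x) _ (fun v => c *: f (x :: v))); last first.
  by move=> v sv; apply: (Hom_at0 _ _ hh); rewrite sv st.
rewrite LL_scale LL_scalel; last by rewrite st; apply: Hom_cons.
  2: by rewrite st; apply: MA_cons.
have -> : \sum_(0 <= i < size t) th t`_i c *: f (x :: set_nth 0 t i x) = 0.
  rewrite big_nat_cond big1 // => i /andP[/andP[_ it] _].
  rewrite (@AltSym _ _ hs ha (x :: set_nth 0 t i x) 0 i.+1) ?scaler0 //=.
  - by rewrite size_set_nth_lt // st.
  - by rewrite -st.
  - by rewrite nsn_eq.
rewrite addr0 sqZ (MA_at0 _ _ hm) ?st // !(Hom_at0 _ _ hh) ?st //.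
rewrite (@dd_ext t _ (fun v => (c ^+ 2) *: g v)); last first.
  by move=> v sv; apply: hg; rewrite sv st.
rewrite dd_scale.
have -> : \sum_(0 <= p < size t) th t`_p (c ^+ 2) *: g (remat p t) = 0.
  by rewrite big1 // => p _; rewrite th_sqr scale0r.
rewrite addr0 scalerA -expr2 thZl -scalerA !scalerDr.
by rewrite !addrA [LHS](ACl (2*4*1*3*5)) /= c2M add0r.
Qed.

Definition fam m (s : seq L) : 'I_m -> L := fun k => s`_k.
Arguments fam : clear implicits.
Definition sof m (x : 'I_m -> L) : seq L := map x (enum 'I_m).

Lemma size_sof m (x : 'I_m -> L) : size (sof x) = m.
Proof. by rewrite /sof size_map size_enum_ord. Qed.

Lemma nth_sof m (x : 'I_m -> L) (k : 'I_m) : (sof x)`_k = x k.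
Proof. by rewrite /sof (nth_map k) ?size_enum_ord // nth_ord_enum. Qed.

Lemma fam_sof m (x : 'I_m -> L) : fam m (sof x) = x.
Proof. by apply: functional_extensionality => k; rewrite /fam nth_sof. Qed.

Lemma sof_fam m s : size s = m -> sof (fam m s) = s.
Proof.
move=> sm; apply: (@eq_from_nth _ 0); first by rewrite size_sof.
by move=> i; rewrite size_sof => im; rewrite (nth_sof _ (Ordinal im)).
Qed.

Lemma delp_fam m i s : delp i (fam m s) = fam m.-1 (remat i s).
Proof. by apply: functional_extensionality => k; rewrite /delp /fam /= nth_remat. Qed.

Lemma vcons_fam m y s : vcons (m := m) y (fam m.-1 s) = fam m (y :: s).
Proof.
by apply: functional_extensionality => -[[|k] hk]; rewrite /vcons /fam.
Qed.

Lemma upd_fam m s (i : 'I_m) v : upd (fam m s) i v = fam m (set_nth 0 s i v).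
Proof.
apply: functional_extensionality => j; rewrite /upd /fam nth_set_nth /=.
by rewrite -(inj_eq val_inj).
Qed.

Lemma fam_set m s i (hi : (i < m)%N) v : fam m (set_nth 0 s i v) = upd (fam m s) (Ordinal hi) v.
Proof. by rewrite upd_fam. Qed.

Lemma sof_upd m (x : 'I_m -> L) i v : sof (upd x i v) = set_nth 0 (sof x) i v.
Proof.
by rewrite -{1}(fam_sof x) upd_fam sof_fam // size_set_nth_lt size_sof.
Qed.

Lemma upd_id m (x : 'I_m -> L) i : upd x i (x i) = x.
Proof. by apply: functional_extensionality => j; rewrite /upd; case: eqP => // ->. Qed.

Lemma upd_upd m (x : 'I_m -> L) i u v : upd (upd x i u) i v = upd x i v.
Proof. by apply: functional_extensionality => j; rewrite /upd; case: eqP. Qed.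

Lemma upd_comm m (x : 'I_m -> L) i j u v : i != j ->
  upd (upd x i u) j v = upd (upd x j v) i u.
Proof.
move=> ij; apply: functional_extensionality => l; rewrite /upd.
case: (eqVneq l j) => [->|lj] //.
by rewrite [j == i]eq_sym (negbTE ij).
Qed.

Lemma f_swap m (f : ('I_m -> L) -> M) x i j u v :
  alternating f -> multiadditive f -> i != j ->
  f (upd (upd x i u) j v) = f (upd (upd x i v) j u).
Proof.
move=> ha hm ij.
pose g u v := f (upd (upd x i u) j v).
have gr : forall u v w, g u (v + w) = g u v + g u w by move=> *; rewrite /g hm.
have gl : forall u v w, g (u + v) w = g u w + g v w.
  by move=> u' v' w; rewrite /g !(upd_comm _ _ _ ij) hm.
have g0 : forall w, g w w = 0.
  by move=> w; apply: (ha _ i j ij); rewrite /upd !eqxx; case: (i == j).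
have := g0 (u + v); rewrite gl !gr !g0 add0r addr0 => /eqM.
by rewrite /g.
Qed.

Lemma Good_of m (f : ('I_m -> L) -> M) :
  alternating f -> multiadditive f ->
  (forall x i (a : A), f (upd x i (a *: x i)) = a *: f x) ->
  Good m (fun s => f (fam m s)).
Proof.
move=> ha hm hh; split.
- apply: SymCrit => s i ss im.
  have i0 : (i < m)%N by apply: ltnW.
  rewrite /swp (fam_set _ im) (fam_set _ i0).
  have E : fam m s = upd (upd (fam m s) (Ordinal i0) s`_i) (Ordinal im) s`_i.+1.
    rewrite -[s`_i]/(fam m s (Ordinal i0)) upd_id.
    by rewrite -[s`_i.+1]/(fam m s (Ordinal im)) upd_id.
  rewrite [in RHS]E f_swap //.
  by apply/negP => /eqP [] e; lia.
- by move=> u i x y su im; rewrite !(fam_set _ im) hm.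
- move=> a s ss.
  have h0 : (0 < m)%N by rewrite -ss.
  have h1 : (1 < m)%N by rewrite -ss.
  by apply: (ha _ (Ordinal h0) (Ordinal h1)).
- move=> u i c su im; rewrite (fam_set _ im).
  exact: (hh (fam m u) (Ordinal im) c).
Qed.

Lemma remat_cons i (a : L) t : remat i.+1 (a :: t) = a :: remat i t.
Proof. by []. Qed.
Lemma remat0 (a : L) t : remat 0 (a :: t) = t.
Proof. by rewrite /remat /= drop0. Qed.

Lemma sum_lt j n (F : nat -> M) : (j <= n)%N ->
  \sum_(0 <= p < j) F p = \sum_(p < n | (p < j)%N) F p.
Proof. by move=> jn; rewrite (big_nat_widen _ _ _ _ _ jn) big_mkord. Qed.

Lemma dd_CF u f : Sym (size u).-1 f -> dd u f =
  \sum_(0 <= q < size u) \sum_(0 <= p < q) f (br u`_p u`_q :: remat p (remat q u))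
  + \sum_(0 <= p < size u) rho u`_p (f (remat p u)).
Proof.
elim: u f => [|a t IH] f hs; first by rewrite /= !big_geq // addr0.
rewrite dd_cons IH; last exact: Sym_consP.
rewrite /= [in RHS]big_nat_recl // (@big_geq _ _ _ 0 0) // add0r [in RHS]big_nat_recl //.
rewrite remat0.
have E : forall i, (0 <= i < size t)%N ->
  \sum_(0 <= p < i.+1) f (br (a :: t)`_p (a :: t)`_i.+1 :: remat p (remat i.+1 (a :: t))) =
  f (set_nth 0 t i (br a t`_i)) + \sum_(0 <= p < i) f (a :: br t`_p t`_i :: remat p (remat i t)).
  move=> i /andP[_ it]; rewrite big_nat_recl //= remat_cons remat0 (Sym_set _ hs) //.
  congr (_ + _); apply: eq_big_nat => p /andP[_ pi] /=; rewrite remat_cons.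
  apply: (Sym_sw _ _ hs).
  have h1 := size_remat it.
  have h2 : size (remat p (remat i t)) = (size (remat i t)).-1 by apply: size_remat; rewrite h1; lia.
  by rewrite h2 h1 /=; lia.
rewrite (eq_big_nat _ _ E) big_split /=.
have E2 : \sum_(0 <= i < size t) rho (a :: t)`_i.+1 (f (remat i.+1 (a :: t))) =
          \sum_(0 <= i < size t) rho t`_i (f (a :: remat i t)) by [].
rewrite E2 LLE' /LLdef.
by rewrite !addrA [LHS](ACl (2*3*1*4)) /=.
Qed.

Lemma dCE_seq m (phi : ('I_m.+1 -> L) -> M) (x : 'I_m.+2 -> L) :
  Sym m.+1 (fun s => phi (fam m.+1 s)) ->
  dCE br rho phi x = dd (sof x) (fun s => phi (fam m.+1 s)).
Proof.
move=> hs; move: (sof x) (size_sof x) (fam_sof x) => u su <-.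
rewrite dd_CF ?su // /dCE; congr (_ + _).
  rewrite big_mkord; apply: eq_bigr => j _.
  rewrite (@sum_lt j m.+1); last by rewrite -ltnS.
  by apply: eq_bigr => i ij; rewrite !delp_fam vcons_fam.
by rewrite big_mkord; apply: eq_bigr => i _; rewrite delp_fam.
Qed.

Lemma delta_seq n (phi : ('I_n.+2 -> L) -> M) (om : L -> ('I_n -> L) -> M) x
  (z : 'I_n.+1 -> L) :
  Sym n.+2 (fun s => phi (fam n.+2 s)) -> Sym n (fun s => om x (fam n s)) ->
  delta br sq rho phi om x z =
  Dl (fun s => phi (fam n.+2 s)) (fun s => om x (fam n s)) x (sof z).
Proof.
move=> hs ho; move: (sof z) (size_sof z) (fam_sof z) => u su <-.
rewrite /delta /Dl dd_CF ?su // LLE' /LLdef su.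
have E4 : \sum_(i < n.+1) phi (vcons (m := n.+2) (br x (fam n.+1 u i))
               (vcons (m := n.+1) x (delp i (fam n.+1 u)))) =
          \sum_(0 <= k < n.+1) phi (fam n.+2 (x :: set_nth 0 u k (br x u`_k))).
  rewrite big_mkord; apply: eq_bigr => i _.
  rewrite delp_fam !vcons_fam; apply: hs; first by rewrite /= size_remat su.
  apply: perm_trans (perm_swap2 _ _ _) _; rewrite perm_cons perm_sym.
  by apply: perm_set_nth; rewrite su.
have E5 : \sum_(j < n.+1) \sum_(i < n.+1 | (i < j)%N)
      om x (vcons (m := n) (br (fam n.+1 u i) (fam n.+1 u j)) (delp i (delp j (fam n.+1 u)))) =
    \sum_(0 <= q < n.+1) \sum_(0 <= p < q) om x (fam n (br u`_p u`_q :: remat p (remat q u))).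
  rewrite big_mkord; apply: eq_bigr => j _.
  rewrite (@sum_lt j n.+1); last exact: ltnW.
  by apply: eq_bigr => i ij; rewrite !delp_fam vcons_fam.
have E2 : \sum_(i < n.+1) rho (fam n.+1 u i) (om x (delp i (fam n.+1 u))) =
          \sum_(0 <= p < n.+1) rho u`_p (om x (fam n (remat p u))).
  by rewrite big_mkord; apply: eq_bigr => i _; rewrite delp_fam.
rewrite E4 E5 E2 !vcons_fam.
by rewrite !addrA [LHS](ACl (1*4*3*5*2)) /=.
Qed.

Lemma Sym_eqk k f g : (forall v, size v = k -> f v = g v) -> Sym k g -> Sym k f.
Proof.
move=> e h s t ss pst; rewrite !e //; first exact: h.
by rewrite -(perm_size pst).
Qed.

Lemma Dl_ext f f' g g' x t :
  (forall v, size v = (size t).+1 -> f v = f' v) ->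
  (forall v, (size v).+1 = size t -> g v = g' v) ->
  Dl f g x t = Dl f' g' x t.
Proof.
move=> ef eg; rewrite /Dl ef // (dd_ext eg).
by rewrite (@LL_ext x _ (fun v => f' (x :: v))) // => v sv; rewrite ef //= sv.
Qed.

Lemma main_core n (phi : ('I_n.+2 -> L) -> M) (om : L -> ('I_n -> L) -> M) :
  is_cochain phi om ->
  is_cochain (dCE br rho phi) (delta br sq rho phi om) /\
  (forall x, dCE br rho (dCE br rho phi) x = 0) /\
  (forall x z, delta br sq rho (dCE br rho phi) (delta br sq rho phi om) x z = 0).
Proof.
case=> phA [[phM phH] [omA [omK [omk [omD [omZ omH]]]]]].
pose Phi := fun s => phi (fam n.+2 s).
pose Om := fun x s => om x (fam n s).
have GP : Good n.+2 Phi.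
  apply: Good_of; [exact: phA | exact: phM | move=> x i a; by rewrite phH upd_id].
have GO : forall x, Good n (Om x).
  by move=> x; apply: Good_of; [exact: omA | exact: (omK x).1 | exact: omH].
have GPd := Good_dd GP.
have GD : forall x, Good n.+1 (Dl Phi (Om x) x) by move=> x; apply: Good_Dl.
have dCE_eq : forall x, dCE br rho phi x = dd (sof x) Phi.
  by move=> x; apply: dCE_seq; case: GP.
have delta_eq : forall x z, delta br sq rho phi om x z = Dl Phi (Om x) x (sof z).
  by move=> x z; apply: delta_seq; [case: GP | case: (GO x)].
case: (GP) => PS PM PA PH.
case: (GPd) => DS DM DA DH.
have DD : forall s, size s = n.+3 -> dCE br rho phi (fam n.+3 s) = dd s Phi.
  by move=> s ss; rewrite dCE_eq sof_fam.
have DL : forall x s, size s = n.+1 -> delta br sq rho phi om x (fam n.+1 s) = Dl Phi (Om x) x s.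
  by move=> x s ss; rewrite delta_eq sof_fam.
split; last split.
- split; last split; last split; last split; last split; last split; last split.
  + move=> x i j ij e; rewrite dCE_eq.
    by apply: (@AltSym _ _ DS DA (sof x) i j); rewrite ?size_sof ?nth_sof.
  + split.
      by move=> x i y y'; rewrite !dCE_eq !sof_upd DM ?size_sof.
    by move=> x i a y; rewrite !dCE_eq !sof_upd (Hom_set _ _ DH) ?size_sof.
  + move=> x z i j ij e; rewrite delta_eq; case: (GD x) => S _ Al _.
    by apply: (@AltSym _ _ S Al (sof z) i j); rewrite ?size_sof ?nth_sof.
  + move=> x; case: (GD x) => _ Ma _ Ho; split.
      by move=> z i y y'; rewrite !delta_eq !sof_upd Ma ?size_sof.
    by move=> z i k y; rewrite !delta_eq !sof_upd (Hom_set _ _ Ho) ?size_sof.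
  + move=> k x z; rewrite !delta_eq.
    have -> : (k ^+ 2)%:A = (k%:A : A) ^+ 2 by rewrite exprZn expr1n.
    apply: (@Dl_scalex _ _ (Om x) _ _ x _ GP); first by rewrite size_sof.
    by move=> v _; rewrite /Om omZ.
  + move=> x y z; rewrite !delta_eq dCE_eq.
    have -> : sof (vcons (m := n.+3) x (vcons (m := n.+2) y z)) = x :: y :: sof z.
      move: (sof z) (size_sof z) (fam_sof z) => u su <-.
      by rewrite !vcons_fam sof_fam //= su.
    apply: (Dl_addx PS PM); first by rewrite size_sof.
    by move=> v sv; rewrite /Om omD !vcons_fam.
  + move=> a x z; rewrite !delta_eq.
    apply: (@Dl_scalex _ _ (Om x) _ _ x _ GP); first by rewrite size_sof.
    by move=> v _; rewrite /Om omZ.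
  + move=> x z i a; rewrite !delta_eq sof_upd -nth_sof.
    by case: (GD x) => _ _ _ Ho; rewrite Ho ?size_sof.
- move=> x; rewrite dCE_seq; last by apply: (Sym_eqk DD).
  rewrite (@dd_ext _ _ (fun v => dd v Phi)); last first.
    by move=> v; rewrite size_sof => -[sv]; apply: DD.
  by apply: dd_dd; rewrite size_sof /=; exact: PM.
- move=> x z; rewrite delta_seq; last first.
    by apply: (Sym_eqk (DL x)); case: (GD x).
    by apply: (Sym_eqk DD).
  rewrite (@Dl_ext _ (fun v => dd v Phi) _ (Dl Phi (Om x) x)); last first.
      by move=> v; rewrite size_sof => -[sv]; apply: DL.
    by move=> v; rewrite size_sof => sv; apply: DD.
  by apply: Dl_Dl; rewrite size_sof /=; [exact: PM | case: (GO x)].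
Qed.
End Core.

Unset Implicit Arguments.

Theorem mainTheorem5 (K : fieldType) (A : comAlgType K) (L M : lmodType A)
  (br : L -> L -> L) (sq : L -> L) (th : L -> A -> A) (rho : L -> M -> M)
  (n : nat) (phi : ('I_n.+2 -> L) -> M) (om : L -> ('I_n -> L) -> M) :
  2%N \in [pchar K] ->
  is_rLR_algebra br sq th ->
  is_rLR_module br sq th rho ->
  is_cochain phi om ->
  is_cochain (dCE br rho phi) (delta br sq rho phi om) /\
  (forall x, dCE br rho (dCE br rho phi) x = 0) /\
  (forall x z, delta br sq rho (dCE br rho phi) (delta br sq rho phi om) x z = 0).
Proof.
move=> ch ha hm hc.
have c2K : (2%:R : K) = 0 := pcharf0 ch.
have c2A : forall a : A, a + a = 0.
  move=> a; have e : (2%:R : K) *: a = a *+ 2 := scaler_nat 2 a.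
  by rewrite -mulr2n -e c2K scale0r.
have c2L : forall x : L, x + x = 0.
  move=> x; have e : (2%:R : A) *: x = x *+ 2 := scaler_nat 2 x.
  by rewrite -mulr2n -e mulr2n c2A scale0r.
have c2M : forall x : M, x + x = 0.
  move=> x; have e : (2%:R : A) *: x = x *+ 2 := scaler_nat 2 x.
  by rewrite -mulr2n -e mulr2n c2A scale0r.
case: ha => brDl [brDr [brZlK [brZrK [brxx [jacobi [sqK [brsq [sqD [thD [thZK [thM [thL [thbr [thsq [brZr sqZ]]]]]]]]]]]]]]].
case: hm => rhoDr [rhoK [rhoL [rho_br [rho_sq rhoZr]]]].
by eapply main_core; eassumption.
Qed.
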